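(* Let $M$ and $G$ be non-archimedean topological groups and let $f\colon M\to G$ be a continuous homomorphism. Then $f$ is an epimorphism in the category $\mathbf{NA}$ if and only if $f(M)$ is dense in $G$.
   Context: All topological groups are Hausdorff. A topological group is non-archimedean if it has a local base at the identity consisting of open subgroups; $\mathbf{NA}$ denotes the category whose objects are the non-archimedean (Hausdorff) topological groups and whose morphisms are the continuous homomorphisms. A morphism $f\colon M\to G$ in $\mathbf{NA}$ is an epimorphism in $\mathbf{NA}$ if there is no pair of distinct morphisms $g,h\colon G\to P$ in $\mathbf{NA}$ with $g\circ f=h\circ f$. *)

(* Defs.v *)
From HB Require Import structures.
From mathcomp Require Import all_boot all_order all_algebra.
From mathcomp Require Import all_classical all_reals all_analysis.
Set Implicit Arguments.
Unset Strict Implicit.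
Unset Printing Implicit Defensive.
Local Open Scope classical_set_scope.

Definition open_subgroup (T : topologicalType) (mul : T -> T -> T)
    (inv : T -> T) (one : T) (H : set T) : Prop :=
  [/\ open H, H one,
      (forall x y, H x -> H y -> H (mul x y)) &
      (forall x, H x -> H (inv x))].

Record NAGroup := {
  na_carrier :> topologicalType;
  na_mul : na_carrier -> na_carrier -> na_carrier;
  na_inv : na_carrier -> na_carrier;
  na_one : na_carrier;
  na_mulA : forall x y z, na_mul x (na_mul y z) = na_mul (na_mul x y) z;
  na_mul1g : forall x, na_mul na_one x = x;
  na_mulg1 : forall x, na_mul x na_one = x;
  na_mulVg : forall x, na_mul (na_inv x) x = na_one;
  na_mulgV : forall x, na_mul x (na_inv x) = na_one;
  na_mul_cont : continuous (fun p : na_carrier * na_carrier => na_mul p.1 p.2);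
  na_inv_cont : continuous na_inv;
  na_hausdorff : hausdorff_space na_carrier;
  na_nonarch : forall U : set na_carrier, nbhs na_one U ->
     exists H : set na_carrier,
       open_subgroup na_mul na_inv na_one H /\ H `<=` U
}.

Definition NA_hom (M G : NAGroup) (f : M -> G) : Prop :=
  continuous f /\ forall x y, f (na_mul x y) = na_mul (f x) (f y).

Definition NA_epi (M G : NAGroup) (f : M -> G) : Prop :=
  forall (P : NAGroup) (g h : G -> P), NA_hom g -> NA_hom h ->
    (forall x, g (f x) = h (f x)) -> g = h.

(* Main.v *)
Require Import Defs.
From HB Require Import structures.
From mathcomp Require Import all_boot all_order all_algebra.
From mathcomp Require Import all_classical all_reals all_analysis.
Set Implicit Arguments. Unset Strict Implicit. Unset Printing Implicit Defensive.
Local Open Scope classical_set_scope.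

Record perm (Y : Type) := Perm { pf : Y -> Y; pg : Y -> Y;
  pK : cancel pf pg; pKV : cancel pg pf }.

Lemma perm_eq (Y : Type) (p q : perm Y) : pf p =1 pf q -> p = q.
Proof.
case: p => f g K KV; case: q => f' g' K' KV' /= e.
have ef : f = f' by apply: funext.
subst f'.
have eg : g = g'.
  apply: funext => y; by rewrite -{1}(KV' y) K.
subst g'. by rewrite (Prop_irrelevance K K') (Prop_irrelevance KV KV').
Qed.

HB.instance Definition _ (Y : Type) := gen_eqMixin (perm Y).
HB.instance Definition _ (Y : Type) := gen_choiceMixin (perm Y).

Fixpoint inl (Y : Type) (y : Y) (s : seq Y) : Prop :=
  if s is x :: t then x = y \/ inl y t else False.
Lemma inl_app Y (y : Y) s1 s2 : inl y (s1 ++ s2) <-> inl y s1 \/ inl y s2.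
Proof. elim: s1 => [|x t IH] /=; first by split=> [|[]] //; right. rewrite IH; tauto. Qed.

Definition agree (Y : Type) (s : seq Y) (p q : perm Y) :=
  forall y, inl y s -> pf q y = pf p y.

Definition pop (Y : Type) (U : set (perm Y)) :=
  forall p, U p -> exists s : seq Y, forall q, agree s p q -> U q.

Lemma popT Y : pop (@setT (perm Y)). Proof. by move=> p _; exists [::]. Qed.
Lemma popI Y : setI_closed (@pop Y).
Proof.
move=> A B hA hB p [/hA [s1 h1] /hB [s2 h2]]; exists (s1 ++ s2) => q hq; split.
  by apply: h1 => y hy; apply: hq; apply/inl_app; left.
by apply: h2 => y hy; apply: hq; apply/inl_app; right.
Qed.
Lemma popU Y (I : Type) (f : I -> set (perm Y)) : (forall i, pop (f i)) ->
    pop (\bigcup_i f i).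
Proof.
move=> hf p [i _ /hf [s hs]]; exists s => q /hs fq; by exists i.
Qed.

HB.instance Definition _ (Y : Type) := isOpenTopological.Build (perm Y)
  (@popT Y) (@popI Y) (@popU Y).

Lemma nbhs_permP Y (p : perm Y) (A : set (perm Y)) :
  nbhs p A <-> exists s, forall q, agree s p q -> A q.
Proof.
split.
  move=> [B [oB Bp BA]]; have [s hs] := oB p Bp; exists s => q /hs; exact: BA.
move=> [s hs]; exists (agree s p); split => //.
move=> q hq; exists s => r hr y hy; rewrite hr // hq //.
Qed.


Section P.
Variable Y : Type.
Implicit Types p q : perm Y.

Definition pmul p q : perm Y.
refine (@Perm Y (fun y => pf p (pf q y)) (fun y => pg q (pg p y)) _ _).
- by move=> y; rewrite !pK.
- by move=> y; rewrite !pKV.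
Defined.
Definition pinv p : perm Y := Perm (pKV p) (pK p).
Definition pone : perm Y := @Perm Y id id (fun _ => erefl) (fun _ => erefl).

Fixpoint mapl (h : Y -> Y) (s : seq Y) := if s is x :: t then h x :: mapl h t else [::].
Lemma inl_map h y s : inl y s -> inl (h y) (mapl h s).
Proof. elim: s => //= x t IH [->|/IH]; tauto. Qed.

Lemma pmul_cont : continuous (fun x : perm Y * perm Y => pmul x.1 x.2).
Proof.
move=> [p1 p2] A /nbhs_permP [s hs].
exists ((agree (mapl (pf p2) s) p1), (agree s p2)).
  by split; apply/nbhs_permP; [exists (mapl (pf p2) s)|exists s].
move=> [q1 q2] /= [h1 h2]; apply: hs => y hy /=.
by rewrite h2 // h1 //; apply: inl_map.
Qed.

Lemma pinv_cont : continuous pinv.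
Proof.
move=> p A /nbhs_permP [s hs]; apply/nbhs_permP.
exists (mapl (pg p) s) => q hq; apply: hs => y hy /=.
have := hq _ (inl_map (pg p) hy); rewrite pKV => e.
by rewrite -{1}e pK.
Qed.

Lemma phaus : hausdorff_space (perm Y).
Proof.
move=> p q hc; apply: perm_eq => y.
have [] := hc (agree [:: y] p) (agree [:: y] q).
- by apply/nbhs_permP; exists [:: y].
- by apply/nbhs_permP; exists [:: y].
- by move=> r [/= e1 e2]; rewrite -e1 ?e2 //; left.
Qed.

Lemma pnonarch (U : set (perm Y)) : nbhs pone U ->
  exists H : set (perm Y), open_subgroup pmul pinv pone H /\ H `<=` U.
Proof.
move=> /nbhs_permP [s hs]; exists (agree s pone); split => //.
split.
- move=> p hp; exists s => q hq y hy; rewrite hq // hp //.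
- by [].
- by move=> a b ha hb y hy /=; rewrite hb // ha.
- by move=> a ha y hy /=; have e := ha y hy; rewrite /= in e; rewrite -{1}e pK.
Qed.
End P.


Definition permNA (Y : Type) : NAGroup.
refine (@Build_NAGroup (perm Y) (@pmul Y) (@pinv Y) (@pone Y) _ _ _ _ _
  (@pmul_cont Y) (@pinv_cont Y) (@phaus Y) (@pnonarch Y)).
- by move=> x y z; apply: perm_eq.
- by move=> x; apply: perm_eq.
- by move=> x; apply: perm_eq.
- by move=> x; apply: perm_eq => y /=; rewrite pK.
- by move=> x; apply: perm_eq => y /=; rewrite pKV.
Defined.

Section Grp.
Variable G : NAGroup.
Local Notation mul := (@na_mul G).
Local Notation inv := (@na_inv G).
Local Notation one := (@na_one G).

Lemma mulKg (x y : G) : mul (inv x) (mul x y) = y.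
Proof. by rewrite na_mulA na_mulVg na_mul1g. Qed.
Lemma mulKVg (x y : G) : mul x (mul (inv x) y) = y.
Proof. by rewrite na_mulA na_mulgV na_mul1g. Qed.
Lemma invM (x y : G) : inv (mul x y) = mul (inv y) (inv x).
Proof.
have e : mul (mul x y) (mul (inv y) (inv x)) = one.
  by rewrite -na_mulA (na_mulA y) na_mulgV na_mul1g na_mulgV.
by rewrite -[LHS]na_mulg1 -e na_mulA na_mulVg na_mul1g.
Qed.
Lemma inv1 : inv one = one.
Proof. by rewrite -[LHS]na_mul1g na_mulgV. Qed.

Lemma mul_right_nbhs (g x : G) (W : set G) : nbhs (mul g x) W ->
  nbhs g [set q | W (mul q x)].
Proof.
move=> hW; have := @na_mul_cont G (g, x) W hW; move=> [[A B] [hA hB] hAB].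
apply: filterS hA => q Aq; apply: (hAB (q, x)); split => //.
exact: nbhs_singleton.
Qed.
Lemma mul_left_nbhs (g c : G) (W : set G) : nbhs (mul c g) W ->
  nbhs g [set q | W (mul c q)].
Proof.
move=> hW; have := @na_mul_cont G (c, g) W hW; move=> [[A B] [hA hB] hAB].
apply: filterS hB => q Bq; apply: (hAB (c, q)); split => //.
exact: nbhs_singleton.
Qed.
Lemma inv_nbhs (g : G) (W : set G) : nbhs (inv g) W -> nbhs g [set q | W (inv q)].
Proof. by move=> hW; have := @na_inv_cont G g W hW. Qed.
End Grp.


Section Main.
Variables (M G : NAGroup) (f : M -> G).
Hypothesis fhom : NA_hom f.
Variable V : set G.
Hypothesis Vsub : open_subgroup (@na_mul G) (@na_inv G) (@na_one G) V.
Local Notation mul := (@na_mul G).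
Local Notation inv := (@na_inv G).
Local Notation one := (@na_one G).

Lemma f1 : f (na_one M) = one.
Proof.
have e := fhom.2 (na_one M) (na_one M); rewrite na_mul1g in e.
rewrite -(na_mulVg (f (na_one M))).
by rewrite {3}e mulKg.
Qed.
Lemma finv m : f (na_inv m) = inv (f m).
Proof.
have e := fhom.2 (na_inv m) m; rewrite na_mulVg f1 in e.
by rewrite -[LHS]na_mulg1 -(na_mulgV (f m)) na_mulA -e na_mul1g.
Qed.

Definition coset (x : G) : set G := fun y => V (mul (inv x) y).
Definition act (g : G) (S : set G) : set G := fun y => S (mul (inv g) y).
Lemma act_coset g x : act g (coset x) = coset (mul g x).
Proof. by apply: funext => y; rewrite /act /coset invM na_mulA. Qed.
Lemma act_mul g h S : act (mul g h) S = act g (act h S).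
Proof. by apply: funext => y; rewrite /act invM na_mulA. Qed.
Lemma act1 S : act one S = S.
Proof. by apply: funext => y; rewrite /act inv1 na_mul1g. Qed.

Definition Ys := {S : set G | exists x, S = coset x}.
Definition Y := (Ys * bool)%type.

Definition actS (g : G) (S : Ys) : Ys.
refine (exist _ (act g (sval S)) _).
case: S => S [x eS] /=; exists (mul g x); rewrite eS; exact: act_coset.
Defined.

Lemma actSK g S : actS (inv g) (actS g S) = S.
Proof.
case: S => S p; apply: eq_exist => /=; by rewrite -act_mul na_mulVg act1.
Qed.
Lemma actSKV g S : actS g (actS (inv g) S) = S.
Proof.
case: S => S p; apply: eq_exist => /=; by rewrite -act_mul na_mulgV act1.
Qed.

Definition piY (g : G) : perm Y.
refine (@Perm Y (fun y => (actS g y.1, y.2)) (fun y => (actS (inv g) y.1, y.2)) _ _).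
- by move=> [S b] /=; rewrite actSK.
- by move=> [S b] /=; rewrite actSKV.
Defined.

Lemma piY_mul g h : piY (mul g h) = pmul (piY g) (piY h).
Proof.
apply: perm_eq => -[S b] /=; congr pair; apply: eq_exist => /=; exact: act_mul.
Qed.

Lemma coset_eq x z : V (mul (inv x) z) -> coset z = coset x.
Proof.
case: Vsub => _ _ Vm Vi hv; apply: funext => y; apply: propext; rewrite /coset; split.
  move=> h; have := Vm _ _ hv h; by rewrite -na_mulA mulKVg.
move=> h; have := Vm _ _ (Vi _ hv) h.
by rewrite invM -na_mulA mulKg.
Qed.

Lemma V1 : nbhs one V.
Proof. case: Vsub => oV V1 _ _; exact: open_nbhs_nbhs. Qed.

Lemma piY_pt (g : G) (y : Y) :
  nbhs g [set q | pf (piY q) y = pf (piY g) y].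
Proof.
case: y => [[S [x eS]] b].
have : nbhs g [set q | V (mul (inv (mul g x)) (mul q x))].
  apply: (@mul_right_nbhs G g x (fun z => V (mul (inv (mul g x)) z))).
  apply: (@mul_left_nbhs G (mul g x) (inv (mul g x)) V); rewrite na_mulVg; exact: V1.
apply: filterS => q hq /=; congr pair; apply: eq_exist => /=.
rewrite eS !act_coset; exact: coset_eq.
Qed.

Lemma cont_pt (F : G -> perm Y) :
  (forall g y, nbhs g [set q | pf (F q) y = pf (F g) y]) -> continuous F.
Proof.
move=> hF g A /nbhs_permP [s hs].
suff : nbhs g [set q | agree s (F g) (F q)] by apply: filterS => q /hs.
elim: s {hs} => [|z s IH].
  by apply: (@filterS _ _ _ setT); [move=> q _ y | exact: filterT].
apply: filterS (filterI (hF g z) IH) => q [h1 h2] y /= [<-|hy]; first exact: h1.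
exact: h2.
Qed.

Lemma piY_cont : continuous piY.
Proof. apply: cont_pt; exact: piY_pt. Qed.

Definition X0 (S : Ys) : Prop := exists m, sval S = coset (f m).
Definition sig0 (y : Y) : Y := (y.1, if `[< X0 y.1 >] then ~~ y.2 else y.2).
Lemma sig0K : cancel sig0 sig0.
Proof.
move=> [S b]; rewrite /sig0 /=; case: (pselect (X0 S)) => h.
  by have -> : `[< X0 S >] = true := asboolT h; rewrite negbK.
by have -> : `[< X0 S >] = false := asboolF h.
Qed.
Definition sigma : perm Y := Perm sig0K sig0K.

Definition g2 (q : G) : perm Y := pmul sigma (pmul (piY q) sigma).

Lemma g2_mul g h : g2 (mul g h) = pmul (g2 g) (g2 h).
Proof.
apply: perm_eq => y; rewrite /g2 piY_mul.
change (pf sigma (pf (piY g) (pf (piY h) (pf sigma y))) =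
  pf sigma (pf (piY g) (pf sigma (pf sigma (pf (piY h) (pf sigma y)))))).
by rewrite [pf sigma (pf sigma _)]sig0K.
Qed.

Lemma g2_cont : continuous g2.
Proof.
apply: (@cont_pt g2) => g y; have := piY_pt g (sig0 y); apply: filterS => q hq.
change (pf sigma (pf (piY q) (sig0 y)) = pf sigma (pf (piY g) (sig0 y))).
by rewrite hq.
Qed.

Lemma X0_act m S : X0 (actS (f m) S) <-> X0 S.
Proof.
case: S => S pS; rewrite /X0 /=; split.
  move=> [m' e]; exists (na_mul (na_inv m) m').
  rewrite -[S]act1 -(na_mulVg (f m)) act_mul e act_coset fhom.2 finv //.
move=> [m' ->]; exists (na_mul m m'); by rewrite act_coset fhom.2.
Qed.

Lemma g2_f m : g2 (f m) = piY (f m).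
Proof.
apply: perm_eq => -[S b].
change (sig0 (pf (piY (f m)) (sig0 (S,b))) = (actS (f m) S, b)).
have e := X0_act m S.
rewrite /sig0 /=; case: (pselect (X0 S)) => h.
  have h' : X0 (actS (f m) S) by apply/e.
  have -> : `[< X0 S >] = true := asboolT h.
  by have -> : `[< X0 (actS (f m) S) >] = true := asboolT h'; rewrite negbK.
have h' : ~ X0 (actS (f m) S) by move/e.
have -> : `[< X0 S >] = false := asboolF h.
by have -> : `[< X0 (actS (f m) S) >] = false := asboolF h'.
Qed.
End Main.


Lemma invK (G : NAGroup) (x : G) : na_inv (na_inv x) = x.
Proof. by rewrite -[LHS]na_mulg1 -(na_mulVg x) na_mulA na_mulVg na_mul1g. Qed.

Unset Implicit Arguments.
Theorem theorem7p9 (M G : NAGroup) (f : M -> G) :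
  NA_hom f -> (NA_epi f <-> dense (range f)).
Proof.
move=> fh; split; last first.
  move=> hd P g h [gc gm] [hc hm] e; apply: funext => x.
  apply: (@na_hausdorff P (g x) (h x)) => A B hA hB.
  have hI : nbhs x (g @^-1` A `&` h @^-1` B).
    apply: filterI; [exact: gc x A hA | exact: hc x B hB].
  rewrite nbhsE in hI; case: hI => W0 [oO Ox] OC.
  have [z [Oz [m _ ezm]]] := hd W0 (ex_intro _ x Ox) oO.
  have [z1 z2] := OC _ Oz; rewrite -ezm in z1 z2.
  by exists (g (f m)); split => //; rewrite e.
move=> epi; apply: contrapT => nd.
have [W0 [[g0 [oO Og0]] OI]] := denseNE nd.
have hW : nbhs (na_one G) [set v | W0 (na_mul g0 (na_inv v))].
  apply: (@inv_nbhs G (na_one G) (fun z => W0 (na_mul g0 z))); rewrite inv1.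
  apply: (@mul_left_nbhs G (na_one G) g0 W0); rewrite na_mulg1.
  exact: open_nbhs_nbhs.
have [V [Vs VW]] := na_nonarch hW.
have e := epi (permNA (Y V)) (piY V) (g2 f V)
  (conj (piY_cont Vs) (@piY_mul _ V)) (conj (@g2_cont _ _ f V Vs) (@g2_mul _ _ f V))
  (fun m => esym (@g2_f _ _ f fh V m)).
pose c1 : Ys V := exist _ (coset V (na_one G)) (ex_intro _ (na_one G) erefl).
have ee : false = (sig0 f (pf (piY V g0) (sig0 f (c1, false)))).2 :=
  congr1 (fun F => (pf (F g0) (c1, false)).2) e.
have X1 : X0 f c1 by exists (na_one M); rewrite /= f1.
have X2 : ~ X0 f (actS g0 c1).
  move=> [m /= em]; rewrite act_coset na_mulg1 in em.
  have : coset V g0 g0 by rewrite /coset na_mulVg; case: Vs.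
  rewrite em /coset => /VW /=; rewrite invM invK na_mulA na_mulgV na_mul1g => Ofm.
  have : (W0 `&` range f) (f m) by split => //; exists m.
  by rewrite OI.
move: ee; rewrite /sig0 /=.
have -> : `[< X0 f c1 >] = true := asboolT X1.
by have -> : `[< X0 f (actS g0 c1) >] = false := asboolF X2.
Qed.
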